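(* Let $N>3$. Consider quantum strategies given by: an integer $d\ge1$; the state $|\psi\rangle=\sum_{i=1}^N\sqrt{p_i}\,|i\rangle|\chi\rangle\in\mathbb{C}^N\otimes\mathbb{C}^d$ with $p_i\ge0$, $\sum_ip_i=1$ and $|\chi\rangle\in\mathbb{C}^d$ a unit vector; symmetric encoding unitaries $U_{\mathbf{x}}=\sum_{i=1}^N|i\rangle\langle i|\otimes U^{x_i}$ for a single unitary $U$ on $\mathbb{C}^d$ (i.e. $U_1=\cdots=U_N=U$); and a two-outcome POVM $\{\Pi_0,\Pi_1\}$, giving the behavior $P(a|\mathbf{x})=\langle\psi|U_{\mathbf{x}}^\dagger\Pi_aU_{\mathbf{x}}|\psi\rangle$. Then the maximum over all such strategies (all $d$, $p_i$, $\chi$, $U$, POVMs) of $$\frac{1}{N+1}P(0|0\cdots0)+\frac{1}{N+1}\sum_{k=1}^NP(1|e_k)-\frac{N}{N+1}$$ equals $$\delta_N=\frac{1}{(N+1)(N^2-3N+1)},$$ and this maximum is achieved with $d=2$ and the symmetric input state $p_i=1/N$ for all $i$.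
   Context: $\{|i\rangle\}$ is the standard basis of $\mathbb{C}^N$; $e_k\in\{0,1\}^N$ denotes the bit string with a single $1$ in position $k$ and zeros elsewhere. The quantity $\frac{1}{N+1}P(0|0\cdots0)+\frac{1}{N+1}\sum_kP(1|e_k)\le\frac{N}{N+1}$ is the fingerprinting inequality, which holds for all behaviors generated with $N-1$ classical particles; the displayed difference is its violation. *)

(* Defs.v *)
(* Scalars: an arbitrary numClosedFieldType C (e.g. complex R
   for a real closed field R, or algC). *)
From HB Require Import structures.
From mathcomp Require Import all_boot all_order all_algebra.
From mathcomp Require Import mxtens.
Set Implicit Arguments. Unset Strict Implicit. Unset Printing Implicit Defensive.
Import Order.TTheory GRing.Theory Num.Theory.
Local Open Scope ring_scope.

Section Fingerprinting.
Variable C : numClosedFieldType.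

Definition dagger m n (M : 'M[C]_(m, n)) : 'M[C]_(n, m) := (map_mx Num.conj M)^T.

Definition psdmx n (M : 'M[C]_n) : Prop :=
  dagger M = M /\ forall v : 'cV[C]_n, 0 <= (dagger v *m M *m v) 0 0.

Definition ket n (i : 'I_n) : 'cV[C]_n := delta_mx i 0.

Record strategy (N d : nat) := Strategy {
  st_p   : 'I_N -> C;
  st_chi : 'cV[C]_d;
  st_U   : 'M[C]_d;
  st_Pi0 : 'M[C]_(N * d);
  st_Pi1 : 'M[C]_(N * d)
}.

Definition valid_strategy N d (S : strategy N d) : Prop :=
  [/\ (forall i, 0 <= st_p S i) /\ \sum_i st_p S i = 1,
      (dagger (st_chi S) *m st_chi S) 0 0 = 1,
      st_U S \is unitarymx,
      psdmx (st_Pi0 S) /\ psdmx (st_Pi1 S)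
    & st_Pi0 S + st_Pi1 S = 1%:M].

Definition st_psi N d (S : strategy N d) : 'cV[C]_(N * d) :=
  \sum_i sqrtC (st_p S i) *: tensmx (ket i) (st_chi S).

Definition st_Ux N d (S : strategy N d) (x : 'I_N -> bool) : 'M[C]_(N * d) :=
  \sum_i tensmx (ket i *m dagger (ket i)) (st_U S ^+ x i).

Definition behavior N d (S : strategy N d) (a : bool) (x : 'I_N -> bool) : C :=
  (dagger (st_psi S) *m dagger (st_Ux S x) *m (if a then st_Pi1 S else st_Pi0 S)
     *m st_Ux S x *m st_psi S) 0 0.

Definition x0 N : 'I_N -> bool := fun _ => false.
Definition ek N (k : 'I_N) : 'I_N -> bool := fun j => j == k.

Definition violation N d (S : strategy N d) : C :=
  (N.+1%:R)^-1 * behavior S false (@x0 N)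
  + (N.+1%:R)^-1 * \sum_k behavior S true (ek k)
  - N%:R / N.+1%:R.

Definition deltaN (N : nat) : C :=
  ((N.+1%:R) * (N%:R ^+ 2 - 3 * N%:R + 1))^-1.

End Fingerprinting.

(* Main.v *)
Require Import Defs.
From HB Require Import structures.
From mathcomp Require Import all_boot all_order all_algebra.
From mathcomp Require Import mxtens spectral ring.
Import Order.TTheory GRing.Theory Num.Theory.
Local Open Scope ring_scope.
Set Implicit Arguments. Unset Strict Implicit. Unset Printing Implicit Defensive.
Section S.
Variable C : numClosedFieldType.
Implicit Types m n p q : nat.

Lemma daggerD m n (A B : 'M[C]_(m,n)) : dagger (A + B) = dagger A + dagger B.
Proof. by apply/matrixP=> i j; rewrite !mxE rmorphD. Qed.
Lemma daggerN m n (A : 'M[C]_(m,n)) : dagger (- A) = - dagger A.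
Proof. by apply/matrixP=> i j; rewrite !mxE rmorphN. Qed.
Lemma daggerB m n (A B : 'M[C]_(m,n)) : dagger (A - B) = dagger A - dagger B.
Proof. by rewrite daggerD daggerN. Qed.
Lemma daggerZ m n (a : C) (A : 'M[C]_(m,n)) : dagger (a *: A) = a^* *: dagger A.
Proof. by apply/matrixP=> i j; rewrite !mxE rmorphM. Qed.
Lemma dagger_sum m n (I : finType) (F : I -> 'M[C]_(m,n)) :
  dagger (\sum_i F i) = \sum_i dagger (F i).
Proof.
apply/matrixP=> i j; rewrite !mxE !summxE rmorph_sum; apply: eq_bigr => k _.
by rewrite !mxE.
Qed.
Lemma daggerM m n p (A : 'M[C]_(m,n)) (B : 'M[C]_(n,p)) :
  dagger (A *m B) = dagger B *m dagger A.
Proof. by rewrite /dagger map_mxM trmx_mul. Qed.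
Lemma daggerK m n (A : 'M[C]_(m,n)) : dagger (dagger A) = A.
Proof. by apply/matrixP=> i j; rewrite !mxE conjCK. Qed.
Lemma dagger1 n : dagger (1%:M : 'M[C]_n) = 1%:M.
Proof. by rewrite /dagger map_mx1 trmx1. Qed.
Lemma daggerT m n p q (A : 'M[C]_(m,n)) (B : 'M[C]_(p,q)) :
  dagger (A *t B) = dagger A *t dagger B.
Proof. by rewrite /dagger map_mxT trmx_tens. Qed.

Lemma tensmxDr m n p q (A : 'M[C]_(m,n)) (B B' : 'M[C]_(p,q)) :
  A *t (B + B') = A *t B + A *t B'.
Proof. by apply/matrixP=> i j; rewrite !mxE mulrDr. Qed.
Lemma tensmxZr m n p q (A : 'M[C]_(m,n)) (c : C) (B : 'M[C]_(p,q)) :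
  A *t (c *: B) = c *: (A *t B).
Proof. by apply/matrixP=> i j; rewrite !mxE mulrCA. Qed.
Lemma tensmxZl m n p q (A : 'M[C]_(m,n)) (c : C) (B : 'M[C]_(p,q)) :
  (c *: A) *t B = c *: (A *t B).
Proof. by apply/matrixP=> i j; rewrite !mxE mulrA. Qed.
Lemma tensmx_sumr m n p q (I : finType) (A : 'M[C]_(m,n)) (F : I -> 'M[C]_(p,q)) :
  A *t (\sum_i F i) = \sum_i A *t F i.
Proof.
apply/matrixP=> i j; rewrite !mxE !summxE mulr_sumr; apply: eq_bigr => k _.
by rewrite !mxE.
Qed.
Lemma tens11 (A B : 'M[C]_1) : (A *t B) 0 0 = A 0 0 * B 0 0.
Proof.
have E : (0 : 'I_(1*1)) = mxtens_index (0, 0) by apply: val_inj.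
by rewrite E tensmxE; congr (A _ _ * B _ _); apply: val_inj.
Qed.

Lemma ket_dot n (i j : 'I_n) : dagger (ket C i) *m ket C j = ((i == j)%:R : C)%:M.
Proof.
apply/matrixP=> a b; rewrite /dagger /ket !mxE.
rewrite (bigD1 i) //= big1 => [|k /negbTE ki]; last by move: ki; rewrite !mxE; case: eqP => //= _ _; rewrite rmorph0 mul0r.
rewrite !mxE [a]ord1 [b]ord1 !eqxx /= rmorph1 mul1r addr0 eq_sym.
by case: (j == i).
Qed.


Lemma tensmx_mulcV m n p q (A : 'M[C]_(m,n)) (B : 'M[C]_(p,q)) (c : 'cV[C]_n) (v : 'cV[C]_q) :
  (A *t B) *m (c *t v : 'cV_(n * q)) = ((A *m c) *t (B *m v) : 'cV_(m * p)).
Proof. exact (tensmx_mul A B c v). Qed.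

Lemma tens_dot n d (a b : 'cV[C]_n) (u v : 'cV[C]_d) :
  (dagger (a *t u : 'cV_(n * d)) *m (b *t v : 'cV_(n * d))) 0 0 =
  (dagger a *m b) 0 0 * (dagger u *m v) 0 0.
Proof.
have E1 : dagger (a *t u : 'cV_(n * d)) = (dagger a *t dagger u : 'rV_(n * d)).
  exact (daggerT a u).
have E2 : (dagger a *t dagger u : 'rV_(n * d)) *m (b *t v : 'cV_(n * d)) =
   (dagger a *m b) *t (dagger u *m v).
  exact (tensmx_mul (dagger a) (dagger u) b v).
by rewrite E1 E2 tens11.
Qed.
Definition bvec N d (v : 'I_N -> 'cV[C]_d) : 'cV[C]_(N * d) :=
  \sum_i ket C i *t v i.
Definition bop N d (X : 'I_N -> 'M[C]_d) : 'M[C]_(N * d) :=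
  \sum_i (ket C i *m dagger (ket C i)) *t X i.

Lemma bop_bvec N d (X : 'I_N -> 'M[C]_d) (v : 'I_N -> 'cV[C]_d) :
  bop X *m bvec v = bvec (fun i => X i *m v i).
Proof.
rewrite /bop /bvec mulmx_suml; apply: eq_bigr => i _.
rewrite mulmx_sumr (bigD1 i) //= big1 => [|j ji].
  by rewrite tensmx_mulcV -mulmxA ket_dot eqxx mul_mx_scalar scale1r addr0.
by rewrite tensmx_mulcV -mulmxA ket_dot eq_sym (negbTE ji) mul_mx_scalar scale0r tens0mx.
Qed.

Lemma bvec_dot N d (u v : 'I_N -> 'cV[C]_d) :
  (dagger (bvec u) *m bvec v) 0 0 = \sum_i (dagger (u i) *m v i) 0 0.
Proof.
rewrite /bvec dagger_sum mulmx_suml summxE; apply: eq_bigr => i _.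
rewrite mulmx_sumr summxE (bigD1 i) //= big1 => [|j ji].
  by rewrite tens_dot ket_dot eqxx !mxE /= mul1r addr0.
by rewrite tens_dot ket_dot eq_sym (negbTE ji) !mxE /= mul0r.
Qed.

Lemma bvecD N d (u v : 'I_N -> 'cV[C]_d) :
  bvec (fun i => u i + v i) = bvec u + bvec v.
Proof. by rewrite /bvec -big_split; apply: eq_bigr => i _; rewrite tensmxDr. Qed.
Lemma bvecZ N d (c : C) (u : 'I_N -> 'cV[C]_d) :
  bvec (fun i => c *: u i) = c *: bvec u.
Proof. by rewrite /bvec scaler_sumr; apply: eq_bigr => i _; rewrite tensmxZr. Qed.
Lemma bvec_sum N d (I : finType) (F : I -> 'I_N -> 'cV[C]_d) :
  bvec (fun i => \sum_k F k i) = \sum_k bvec (F k).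
Proof.
rewrite /bvec exchange_big /=; apply: eq_bigr => i _; exact (tensmx_sumr (ket C i) (fun k => F k i)).
Qed.

Definition bf n (P : 'M[C]_n) (u v : 'cV[C]_n) := (dagger u *m P *m v) 0 0.
Definition qf n (P : 'M[C]_n) (u : 'cV[C]_n) := bf P u u.

Section BF.
Variables (n : nat) (P : 'M[C]_n).
Lemma bfDl u u' v : bf P (u + u') v = bf P u v + bf P u' v.
Proof. by rewrite /bf daggerD !mulmxDl mxE. Qed.
Lemma bfDr u v v' : bf P u (v + v') = bf P u v + bf P u v'.
Proof. by rewrite /bf mulmxDr mxE. Qed.
Lemma bfZl c u v : bf P (c *: u) v = c^* * bf P u v.
Proof. by rewrite /bf daggerZ -!scalemxAl mxE. Qed.
Lemma bfZr c u v : bf P u (c *: v) = c * bf P u v.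
Proof. by rewrite /bf -!scalemxAr mxE. Qed.
Lemma bfNl u v : bf P (- u) v = - bf P u v.
Proof. by rewrite -scaleN1r bfZl rmorphN1 mulN1r. Qed.
Lemma bfNr u v : bf P u (- v) = - bf P u v.
Proof. by rewrite -scaleN1r bfZr mulN1r. Qed.
Lemma bf_suml (I : finType) (F : I -> 'cV[C]_n) v :
  bf P (\sum_k F k) v = \sum_k bf P (F k) v.
Proof. by rewrite /bf dagger_sum !mulmx_suml summxE. Qed.
Lemma bf_sumr (I : finType) (F : I -> 'cV[C]_n) u :
  bf P u (\sum_k F k) = \sum_k bf P u (F k).
Proof. by rewrite /bf mulmx_sumr summxE. Qed.

Lemma qf_comb a b u v : qf P (a *: u + b *: v) =
  a^* * a * qf P u + b^* * b * qf P v + a^* * b * bf P u v + b^* * a * bf P v u.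
Proof.
rewrite /qf !(bfDl, bfDr, bfZl, bfZr).
ring.
Qed.
Lemma qf_lin a u v : qf P (a *: u - v) =
  a^* * a * qf P u - a^* * bf P u v - a * bf P v u + qf P v.
Proof.
rewrite /qf !(bfDl, bfDr, bfZl, bfZr, bfNl, bfNr).
ring.
Qed.
End BF.

Lemma eq_bvec N d (u v : 'I_N -> 'cV[C]_d) : (forall i, u i = v i) -> bvec u = bvec v.
Proof. by move=> h; apply: eq_bigr => i _; rewrite h. Qed.

Lemma daggerE m n (M : 'M[C]_(m,n)) : dagger M = (M ^t* )%sesqui.
Proof. by apply/matrixP=> i j; rewrite !mxE. Qed.

Lemma unit_dag d (U : 'M[C]_d) : U \is unitarymx -> dagger U *m U = 1%:M.
Proof. by move=> hU; have := mulmxKtV (1%:M : 'M_d) hU erefl; rewrite mul1mx daggerE. Qed.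

Lemma unit_pow d (U : 'M[C]_d) (b : bool) : U \is unitarymx ->
  dagger (U ^+ b) *m U ^+ b = 1%:M.
Proof.
move=> hU; case: b => /=; first by rewrite expr1 unit_dag.
by rewrite expr0 dagger1 mul1mx.
Qed.

Lemma m_pos N : (3 < N)%N -> 0 < (N%:R ^+ 2 - 3 * N%:R + 1 : C).
Proof.
move=> hN; have [c ->] : exists c, N = (c + 4)%N by exists (N - 4)%N; rewrite subnK.
have -> : ((c + 4)%:R ^+ 2 - 3 * (c + 4)%:R + 1 : C) = (c * c + 5 * c + 5)%:R.
  by rewrite !natrD !natrM; ring.
by rewrite ltr0n addn_gt0 orbT.
Qed.

Section Strat.
Variables (N d : nat) (S : strategy C N d).

Definition psif (f : 'I_N -> 'cV[C]_d) := bvec (fun i => sqrtC (st_p S i) *: f i).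

Lemma st_psiE : st_psi S = psif (fun _ => st_chi S).
Proof.
rewrite /st_psi /psif /bvec; apply: eq_bigr => i _.
symmetry; exact (tensmxZr (ket C i) (sqrtC (st_p S i)) (st_chi S)).
Qed.

Lemma UxE x f : st_Ux S x *m psif f = psif (fun i => st_U S ^+ x i *m f i).
Proof.
rewrite /psif.
have -> : st_Ux S x = bop (fun i => st_U S ^+ x i) by [].
by rewrite bop_bvec; apply: eq_bvec => i; rewrite scalemxAr.
Qed.

Lemma psif_norm f : (forall i, 0 <= st_p S i) ->
  (dagger (psif f) *m psif f) 0 0 = \sum_i st_p S i * (dagger (f i) *m f i) 0 0.
Proof.
move=> hp; rewrite bvec_dot; apply: eq_bigr => i _.
rewrite daggerZ -scalemxAr -scalemxAl !mxE (conj_Creal (sqrtC_real (hp i))).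
by rewrite mulrA -expr2 sqrtCK.
Qed.

Lemma psif_dot f g : (forall i, 0 <= st_p S i) ->
  (dagger (psif f) *m psif g) 0 0 = \sum_i st_p S i * (dagger (f i) *m g i) 0 0.
Proof.
move=> hp; rewrite bvec_dot; apply: eq_bigr => i _.
rewrite daggerZ -scalemxAr -scalemxAl !mxE (conj_Creal (sqrtC_real (hp i))).
by rewrite mulrA -expr2 sqrtCK.
Qed.

Lemma psif_sum (I : finType) (G : I -> 'I_N -> 'cV[C]_d) :
  \sum_k psif (G k) = psif (fun i => \sum_k G k i).
Proof.
rewrite /psif -bvec_sum; apply: eq_bvec => i; by rewrite scaler_sumr.
Qed.

Lemma psifD f g : psif f + psif g = psif (fun i => f i + g i).
Proof. by rewrite /psif -bvecD; apply: eq_bvec => i; rewrite scalerDr. Qed.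
Lemma psifZ c f : c *: psif f = psif (fun i => c *: f i).
Proof. by rewrite /psif -bvecZ; apply: eq_bvec => i; rewrite !scalerA mulrC. Qed.

Lemma behE a x : behavior S a x =
  bf (if a then st_Pi1 S else st_Pi0 S) (st_Ux S x *m st_psi S) (st_Ux S x *m st_psi S).
Proof. by rewrite /behavior /bf daggerM !mulmxA. Qed.

End Strat.

Lemma bound N d (S : strategy C N d) : (3 < N)%N -> valid_strategy S ->
  violation S <= deltaN C N.
Proof.
move=> hN [[hp0 hp1] hchi hU [[hP0h hP0] [hP1h hP1]] hsum].
set P0 := st_Pi0 S; set P1 := st_Pi1 S; set ps := st_psi S.
set U := st_U S; set chi := st_chi S.
pose F k := st_Ux S (ek k) *m ps.
pose b := st_Ux S (fun _ => true) *m ps.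
have ps_psif : ps = psif S (fun _ => chi) := st_psiE S.
have normUc (x : bool) : (dagger (U ^+ x *m chi) *m (U ^+ x *m chi)) 0 0 = 1.
  by rewrite daggerM mulmxA -(mulmxA (dagger chi)) unit_pow // mulmx1.
have normx x : (dagger (st_Ux S x *m ps) *m (st_Ux S x *m ps)) 0 0 = 1.
  rewrite ps_psif UxE psif_norm //.
  under eq_bigr do rewrite normUc mulr1.
  exact: hp1.
have hP1E : P1 = 1%:M - P0 by rewrite -hsum [P0 + P1]addrC addrK.
have q1 v : bf P1 v v = (dagger v *m v) 0 0 - qf P0 v.
  by rewrite /qf /bf hP1E mulmxBr mulmxBl mulmx1 !mxE.
have beh0 : behavior S false (@x0 N) = qf P0 ps.
  have E : st_Ux S (@x0 N) *m ps = ps.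
    rewrite ps_psif UxE; apply: eq_bvec => i /=; by rewrite expr0 mul1mx.
  by rewrite behE /= E.
have beh1 k : behavior S true (ek k) = 1 - qf P0 (F k).
  by rewrite behE /= q1 normx.
set k := (N%:R : C).
have k0 : 0 < k by rewrite ltr0n; apply: leq_trans hN.
set m := k ^+ 2 - 3 * k + 1.
have m0 : 0 < m by exact: m_pos.
have viol : violation S = (qf P0 ps - \sum_k qf P0 (F k)) / (k + 1).
  rewrite /violation beh0; under eq_bigr do rewrite beh1.
  have e1 : (N.+1%:R : C) = k + 1 by rewrite /k natr1.
  rewrite sumrB sumr_const card_ord e1 -/k.
  have k1 : k + 1 != 0 by rewrite /k natr1 pnatr_eq0.
  field. exact: k1.
have N0 : (0 < N)%N by apply: leq_trans hN.
have conjk : k^* = k by rewrite /k conjC_nat.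
have eNm1 : (N.-1)%:R = k - 1 :> C by rewrite /k -{2}(prednK N0) -natr1 addrK.
have sumF : \sum_k F k = (k - 1) *: ps + b.
  rewrite /F /b ps_psif; under eq_bigr do rewrite UxE.
  rewrite UxE psif_sum psifZ psifD /psif; apply: eq_bvec => i; congr (_ *: _).
  rewrite (bigD1 i) //= /ek eqxx addrC; congr (_ + _).
  under eq_bigr => j ji do rewrite eq_sym (negbTE ji) expr0 mul1mx.
  by rewrite sumr_const cardC1 card_ord -scaler_nat eNm1.
have step1 : qf P0 (\sum_k F k) <= k * \sum_k qf P0 (F k).
  have E : \sum_j qf P0 (k *: F j - \sum_k F k) =
      k * (k * \sum_k qf P0 (F k) - qf P0 (\sum_k F k)).
    under eq_bigr do rewrite qf_lin.
    rewrite conjk.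
    rewrite big_split /= !sumrB -!mulr_sumr -bf_suml -bf_sumr sumr_const card_ord.
    rewrite -mulr_natl -/k /qf; ring.
  have : 0 <= \sum_j qf P0 (k *: F j - \sum_k F k).
    by apply: sumr_ge0 => j _; exact: hP0.
  by rewrite E pmulr_rge0 // subr_ge0.
set A := qf P0 ps; set B := qf P0 b; set X := bf P0 ps b + bf P0 b ps.
have realk : k \is Num.real by rewrite /k realn.
have conjk1 : (k - 1)^* = k - 1.
  by apply: conj_Creal; rewrite rpredB // real1.
have conjm : m^* = m.
  by apply: conj_Creal; rewrite /m rpredD ?rpredB ?rpredM ?rpredX ?real1 ?realn.
have qs : qf P0 (\sum_k F k) = (k - 1) ^+ 2 * A + B + (k - 1) * X.
  rewrite sumF -[b in _ + b]scale1r qf_comb conjk1 rmorph1 /X /A /B; ring.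
have qz : 0 <= m ^+ 2 * A + (k - 1) ^+ 2 * B + m * (k - 1) * X.
  have E : qf P0 (m *: ps + (k - 1) *: b) = m ^+ 2 * A + (k - 1) ^+ 2 * B + m * (k - 1) * X.
    by rewrite qf_comb conjm conjk1 /X /A /B; ring.
  rewrite -E; exact: hP0.
have nb : (dagger b *m b) 0 0 = 1 := normx _.
have Ble : B <= 1.
  have := hP1 b; rewrite -/(bf P1 b b) q1 nb subr_ge0; exact.
have e1 : (N.+1%:R : C) = k + 1 by rewrite /k natr1.
rewrite viol /deltaN e1 -/k -/m.
have H1 : qf P0 ps - \sum_k qf P0 (F k) <=
    B / m - (m ^+ 2 * A + (k - 1) ^+ 2 * B + m * (k - 1) * X) / (k * m).
  have hS : k^-1 * qf P0 (\sum_k F k) <= \sum_k qf P0 (F k) by rewrite ler_pdivrMl.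
  apply: (le_trans (y := A - k^-1 * qf P0 (\sum_k F k))).
    by rewrite lerD2l lerN2.
  rewrite qs.
  suff -> : A - k^-1 * ((k - 1) ^+ 2 * A + B + (k - 1) * X) =
    B / m - (m ^+ 2 * A + (k - 1) ^+ 2 * B + m * (k - 1) * X) / (k * m) by [].
  have mn0 : m != 0 by rewrite gt_eqF.
  have kn0 : k != 0 by rewrite gt_eqF.
  move: mn0; rewrite /m => mn0.
  field. by rewrite mn0 kn0.
have H2 : B / m - (m ^+ 2 * A + (k - 1) ^+ 2 * B + m * (k - 1) * X) / (k * m) <= m^-1.
  apply: (le_trans (y := B / m)).
    by rewrite gerBl divr_ge0 // mulr_ge0 // ltW.
  rewrite -[leRHS]mul1r; apply: ler_wpM2r => //; by rewrite invr_ge0 ltW.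
have H3 := le_trans H1 H2.
have k10 : 0 <= (k + 1)^-1 by rewrite invr_ge0 addr_ge0 // ltW.
apply: (le_trans (ler_wpM2r k10 H3)).
by rewrite invfM mulrC.
Qed.

Lemma viol_formula N d (S : strategy C N d) : (0 < N)%N -> valid_strategy S ->
  violation S = (qf (st_Pi0 S) (st_psi S)
     - \sum_k qf (st_Pi0 S) (st_Ux S (ek k) *m st_psi S)) / (N%:R + 1).
Proof.
move=> N0 [[hp0 hp1] hchi hU [[hP0h hP0] [hP1h hP1]] hsum].
set P0 := st_Pi0 S; set P1 := st_Pi1 S; set ps := st_psi S.
set U := st_U S; set chi := st_chi S.
pose F k := st_Ux S (ek k) *m ps.
have ps_psif : ps = psif S (fun _ => chi) := st_psiE S.
have normUc (x : bool) : (dagger (U ^+ x *m chi) *m (U ^+ x *m chi)) 0 0 = 1.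
  by rewrite daggerM mulmxA -(mulmxA (dagger chi)) unit_pow // mulmx1.
have normx x : (dagger (st_Ux S x *m ps) *m (st_Ux S x *m ps)) 0 0 = 1.
  rewrite ps_psif UxE psif_norm //.
  under eq_bigr do rewrite normUc mulr1.
  exact: hp1.
have hP1E : P1 = 1%:M - P0 by rewrite -hsum [P0 + P1]addrC addrK.
have q1 v : bf P1 v v = (dagger v *m v) 0 0 - qf P0 v.
  by rewrite /qf /bf hP1E mulmxBr mulmxBl mulmx1 !mxE.
have beh0 : behavior S false (@x0 N) = qf P0 ps.
  have E : st_Ux S (@x0 N) *m ps = ps.
    rewrite ps_psif UxE; apply: eq_bvec => i /=; by rewrite expr0 mul1mx.
  by rewrite behE /= E.
have beh1 k : behavior S true (ek k) = 1 - qf P0 (F k).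
  by rewrite behE /= q1 normx.
set k := (N%:R : C).
have k1 : k + 1 != 0 by rewrite /k natr1 pnatr_eq0.
rewrite /violation beh0; under eq_bigr do rewrite beh1.
have e1 : (N.+1%:R : C) = k + 1 by rewrite /k natr1.
rewrite sumrB sumr_const card_ord e1 -/k.
field. exact: k1.
Qed.

Lemma entryB m n (A B : 'M[C]_(m,n)) i j : (A - B) i j = A i j - B i j.
Proof. by rewrite !mxE. Qed.

Lemma dot1 (X Y : 'M[C]_1) : (X *m Y) 0 0 = X 0 0 * Y 0 0.
Proof. by rewrite mxE big_ord1. Qed.

Lemma dot_conj n (u v : 'cV[C]_n) : (dagger u *m v) 0 0 = ((dagger v *m u) 0 0)^*.
Proof.
rewrite !mxE rmorph_sum; apply: eq_bigr => j _.
by rewrite !mxE rmorphM /= conjCK mulrC.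
Qed.

Lemma qf1_ge0 n (u : 'cV[C]_n) : 0 <= qf 1%:M u.
Proof.
rewrite /qf /bf mulmx1 mxE; apply: sumr_ge0 => j _.
by rewrite !mxE mulrC mul_conjC_ge0.
Qed.

Lemma bf1 n (u v : 'cV[C]_n) : bf 1%:M u v = (dagger u *m v) 0 0.
Proof. by rewrite /bf mulmx1. Qed.

Lemma rank1_psd n (b : 'cV[C]_n) : psdmx (b *m dagger b).
Proof.
split; first by rewrite daggerM daggerK.
move=> v.
have -> : dagger v *m (b *m dagger b) *m v = (dagger v *m b) *m (dagger b *m v).
  by rewrite !mulmxA.
rewrite dot1 dot_conj.
by rewrite mulrC mul_conjC_ge0.
Qed.

Lemma proj_psd n (b : 'cV[C]_n) : (dagger b *m b) 0 0 = 1 ->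
  psdmx (1%:M - b *m dagger b).
Proof.
move=> nb; split; first by rewrite daggerB dagger1 daggerM daggerK.
move=> v; set c := (dagger b *m v) 0 0.
have E : (dagger v *m (1%:M - b *m dagger b) *m v) 0 0 = (dagger v *m v) 0 0 - c^* * c.
  rewrite mulmxBr mulmxBl mulmx1 entryB.
  have -> : dagger v *m (b *m dagger b) *m v = (dagger v *m b) *m (dagger b *m v).
    by rewrite !mulmxA.
  by rewrite dot1 (dot_conj v b) -/c.
rewrite E; have := qf1_ge0 (c *: b - v).
rewrite qf_lin /qf !bf1 nb -/c (dot_conj v b) -/c.
suff -> : c^* * c * 1 - c^* * c - c * c^* + (dagger v *m v) 0 0 =
  (dagger v *m v) 0 0 - c^* * c by [].
ring.
Qed.

Lemma dot_ket n (u : 'cV[C]_n) j : (dagger u *m ket C j) 0 0 = (u j 0)^*.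
Proof.
rewrite /ket mxE (bigD1 j) //= big1 => [|l lj]; last first.
  by rewrite !mxE (negbTE lj) mulr0.
by rewrite !mxE !eqxx /= mulr1 addr0.
Qed.

Lemma mul_ket n (A : 'M[C]_n) i j : (A *m ket C j) i 0 = A i j.
Proof.
rewrite /ket mxE (bigD1 j) //= big1 => [|l lj]; last first.
  by rewrite !mxE (negbTE lj) mulr0.
by rewrite !mxE !eqxx /= mulr1 addr0.
Qed.

Lemma qf_rank1 n (b v : 'cV[C]_n) :
  qf (b *m dagger b) v = ((dagger b *m v) 0 0)^* * (dagger b *m v) 0 0.
Proof.
rewrite /qf /bf.
have -> : dagger v *m (b *m dagger b) *m v = (dagger v *m b) *m (dagger b *m v).
  by rewrite !mulmxA.
by rewrite dot1 (dot_conj v b).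
Qed.

Section Construct.
Variables (N : nat) (hN : (3 < N)%N).
Let k : C := N%:R.
Let m : C := k ^+ 2 - 3 * k + 1.
Let z : C := - (k - 1) / m.
Let w : C := sqrtC (1 - z ^+ 2).

Lemma k_gt0 : 0 < k. Proof. by rewrite ltr0n; apply: leq_trans hN. Qed.
Lemma m_gt0 : 0 < m. Proof. exact: m_pos. Qed.
Lemma k_real : k \is Num.real. Proof. by rewrite realn. Qed.
Lemma m_real : m \is Num.real.
Proof. by rewrite rpredD ?rpredB ?rpredM ?rpredX ?real1 ?realn. Qed.
Lemma z_real : z \is Num.real.
Proof. by rewrite rpredM ?rpredN ?rpredV ?rpredB ?real1 ?k_real ?m_real. Qed.
Lemma z2_le1 : 0 <= 1 - z ^+ 2.
Proof.
rewrite /z /m /k.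
have [c ->] : exists c, N = (c + 4)%N by exists (N - 4)%N; rewrite subnK.
have hm' : 0 < ((c + 4)%:R ^+ 2 - 3 * (c + 4)%:R + 1 : C).
  by rewrite m_pos // leq_addl.
move: hm'; rewrite natrD; set x : C := c%:R.
have x0 : 0 <= x by rewrite ler0n.
have hden : (x + 4) ^+ 2 - 3 * (x + 4) + 1 = x * x + 5 * x + 5 by ring.
rewrite hden => hpos.
have hn : x * x + 5 * x + 5 != 0 by rewrite gt_eqF.
have E : 1 - (- (x + 4 - 1) / (x * x + 5 * x + 5)) ^+ 2 =
  ((x * x + 4 * x + 2) * (x * x + 6 * x + 8)) / (x * x + 5 * x + 5) ^+ 2.
  by field.
rewrite E divr_ge0 //; last by rewrite exprn_ge0 // ltW.
by apply: mulr_ge0; rewrite !addr_ge0 ?mulr_ge0 ?ler0n.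
Qed.
Lemma w_real : w \is Num.real. Proof. exact: sqrtC_real z2_le1. Qed.
Lemma zw : z ^+ 2 + w ^+ 2 = 1. Proof. by rewrite /w sqrtCK addrC subrK. Qed.

Definition Urot : 'M[C]_2 :=
  \matrix_(i, j) (if i == j then z else if i == 0 then - w else w).

Lemma Urot_unitary : Urot \is unitarymx.
Proof.
apply/unitarymxP; rewrite -daggerE; apply/matrixP => i j.
rewrite !mxE !big_ord_recl big_ord0 !mxE.
have cz : z^* = z := conj_Creal z_real.
have cw : w^* = w := conj_Creal w_real.
have hzw := zw.
case: i => [[|[|i']] hi] //; case: j => [[|[|j']] hj] //=.
all: rewrite ?rmorphN /= ?cz ?cw.
all: rewrite -?hzw; ring.
Qed.

Definition chi2 : 'cV[C]_2 := ket C 0.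
Definition bb : 'cV[C]_(N * 2) := bvec (fun _ : 'I_N => sqrtC k^-1 *: (Urot *m chi2)).
Definition Sopt : strategy C N 2 :=
  @Strategy C N 2 (fun _ => k^-1) chi2 Urot (bb *m dagger bb) (1%:M - bb *m dagger bb).

Lemma chi2_norm : (dagger chi2 *m chi2) 0 0 = 1.
Proof. by rewrite /chi2 ket_dot eqxx !mxE eqxx. Qed.

Lemma nUc : (dagger (Urot *m chi2) *m (Urot *m chi2)) 0 0 = 1.
Proof.
by rewrite daggerM mulmxA -(mulmxA (dagger chi2)) unit_dag ?Urot_unitary // mulmx1 chi2_norm.
Qed.

Lemma dUc : (dagger (Urot *m chi2) *m chi2) 0 0 = z.
Proof.
by rewrite /chi2 dot_ket mul_ket mxE eqxx (conj_Creal z_real).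
Qed.

Lemma hp : forall i, 0 <= st_p Sopt i.
Proof. by move=> i /=; rewrite invr_ge0 ltW // k_gt0. Qed.

Lemma bbE : bb = psif Sopt (fun _ => Urot *m chi2).
Proof. by []. Qed.

Lemma nbb : (dagger bb *m bb) 0 0 = 1.
Proof.
rewrite bbE psif_norm; last exact: hp.
under eq_bigr do rewrite nUc mulr1.
by rewrite /= sumr_const card_ord -mulr_natl mulfV // gt_eqF // k_gt0.
Qed.

Lemma Sopt_valid : valid_strategy Sopt.
Proof.
split.
- split; first exact: hp.
  by rewrite /= sumr_const card_ord -mulr_natl mulfV // gt_eqF // k_gt0.
- exact: chi2_norm.
- exact: Urot_unitary.
- split; [exact: rank1_psd | exact: proj_psd nbb].
- by rewrite /= addrC subrK.
Qed.

Lemma Sopt_viol : violation Sopt = deltaN C N.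
Proof.
have N0 : (0 < N)%N by apply: leq_trans hN.
rewrite viol_formula //; last exact: Sopt_valid.
have kn0 : k != 0 by rewrite gt_eqF // k_gt0.
have dpsi : (dagger bb *m st_psi Sopt) 0 0 = z.
  rewrite st_psiE bbE psif_dot; last exact: hp.
  under eq_bigr do rewrite dUc.
  by rewrite /= sumr_const card_ord -mulr_natl mulrA mulfV // mul1r.
have eNm1 : (N.-1)%:R = k - 1 :> C by rewrite /k -{2}(prednK N0) -natr1 addrK.
have dF j : (dagger bb *m (st_Ux Sopt (ek j) *m st_psi Sopt)) 0 0 =
    k^-1 * (1 + (k - 1) * z).
  rewrite st_psiE UxE bbE psif_dot; last exact: hp.
  rewrite (bigD1 j) //= /ek eqxx expr1 nUc.
  under eq_bigr => i ij do rewrite (negbTE ij) expr0 mul1mx dUc.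
  rewrite sumr_const cardC1 card_ord -mulr_natl eNm1; ring.
have cr : (k^-1 * (1 + (k - 1) * z)) \is Num.real.
  have kr1 : k^-1 \is Num.real by rewrite rpredV k_real.
  have c2 : (1 + (k - 1) * z) \is Num.real :=
    rpredD (real1 _) (rpredM (rpredB k_real (real1 _)) z_real).
  exact: rpredM kr1 c2.
rewrite /= qf_rank1 dpsi (conj_Creal z_real).
under eq_bigr do rewrite qf_rank1 dF (conj_Creal cr).
rewrite sumr_const card_ord -mulr_natl /deltaN.
have e1 : (N.+1%:R : C) = k + 1 by rewrite /k natr1.
rewrite e1 -/k /z.
have mn0 : m != 0 by rewrite gt_eqF // m_gt0.
have k1n0 : k + 1 != 0 by rewrite gt_eqF // addr_gt0 // k_gt0.
move: mn0; rewrite /m => mn0.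
field. by rewrite kn0 k1n0 mn0.
Qed.

End Construct.

End S.

Unset Implicit Arguments.

Theorem theorem1 (C : numClosedFieldType) (N : nat) (hN : (3 < N)%N) :
  (forall (d : nat) (S : strategy C N d), (0 < d)%N -> valid_strategy S ->
     violation S <= deltaN C N)
  /\ (exists S : strategy C N 2,
        [/\ valid_strategy S,
            (forall i, st_p S i = (N%:R)^-1)
          & violation S = deltaN C N]).
Proof.
split.
- by move=> d S _ hv; exact: bound hN hv.
- exists (Sopt C N); split.
  + exact: Sopt_valid hN.
  + by [].
  + exact: Sopt_viol hN.
Qed.
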